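(* Let $r \in \mathbb{Q} \cap (0,1)$ be such that $S_r$ is atomic (equivalently, $\mathsf{n}(r) > 1$). Let $x \in S_r \setminus \{0\}$ and let $z = \sum_{i=0}^N \alpha_i r^i \in \mathsf{Z}(x)$, where $N \in \mathbb{N}$ and $\alpha_0, \dots, \alpha_N \in \mathbb{N}_0$. Then: (1) $|z| = \min \mathsf{L}(x)$ if and only if $\alpha_i < \mathsf{d}(r)$ for all $i \in \{1, \dots, N\}$; (2) there is exactly one factorization in $\mathsf{Z}(x)$ of minimum length; (3) $\sup \mathsf{L}(x) = \infty$ if and only if $\alpha_i \ge \mathsf{n}(r)$ for some $i \in \{0, \dots, N\}$; (4) $|\mathsf{Z}(x)| = 1$ if and only if $|\mathsf{L}(x)| = 1$, and in this case $\alpha_i < \mathsf{n}(r)$ for all $i \in \{0, \dots, N\}$.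
   Context: For $q \in \mathbb{Q}_{>0}$, $\mathsf{n}(q)$ and $\mathsf{d}(q)$ denote the unique positive integers with $\gcd(\mathsf{n}(q),\mathsf{d}(q))=1$ and $q = \mathsf{n}(q)/\mathsf{d}(q)$. For $r \in \mathbb{Q}_{>0}$, $S_r$ denotes the additive submonoid of $(\mathbb{Q}_{\ge 0},+)$ generated by $\{r^n : n \in \mathbb{N}_0\}$. $S_r$ is atomic exactly when $r=1$ or $\mathsf{n}(r)>1$; if moreover $r \notin \mathbb{N}$, its atoms (nonzero elements not expressible as a sum of two nonzero elements) are exactly the pairwise distinct elements $r^n$, $n \in \mathbb{N}_0$. A factorization of $x \in S_r$ is a formal finite sum $\sum_i \alpha_i r^i$ with $\alpha_i \in \mathbb{N}_0$ (an element of the free commutative monoid on the atoms) whose value in $\mathbb{Q}$ is $x$; $\mathsf{Z}(x)$ is the set of factorizations of $x$, the length of $z=\sum_i \alpha_i r^i$ is $|z| = \sum_i \alpha_i$, and $\mathsf{L}(x) = \{|z| : z \in \mathsf{Z}(x)\}$ is the set of lengths of $x$. Two formal sums differing only by zero coefficients are identified. *)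

(* Defs.v *)
From HB Require Import structures.
From mathcomp Require Import all_boot all_order all_algebra.
Set Implicit Arguments. Unset Strict Implicit. Unset Printing Implicit Defensive.
Import Order.TTheory GRing.Theory Num.Theory.

(* A factorization sum_i alpha_i r^i in S_r is represented by its coefficient
   list [:: alpha_0; ...; alpha_N] (a seq nat).  Two lists differing only by
   trailing zeros denote the same formal sum (see [same_fact]). *)

Definition fval (r : rat) (s : seq nat) : rat :=
  (\sum_(i < size s) (nth 0%N s i)%:R * r ^+ i)%R.

Definition flen (s : seq nat) : nat := sumn s.

Definition same_fact (s t : seq nat) : Prop :=
  forall i : nat, nth 0%N s i = nth 0%N t i.

Definition is_fact (r x : rat) (s : seq nat) : Prop := fval r s = x.

(* Main.v *)
Require Import Defs.
From HB Require Import structures.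
From mathcomp Require Import all_boot all_order all_algebra.
From mathcomp Require Import zify ring lra.
From Stdlib Require Import Classical.
Import Order.TTheory GRing.Theory Num.Theory.
Set Implicit Arguments. Unset Strict Implicit.

Section S.
Variables (r : rat) (nn dd : nat).
Hypothesis Hr : r = (nn%:R / dd%:R)%R.
Hypothesis Hn : (1 < nn)%N.
Hypothesis Hnd : (nn < dd)%N.
Hypothesis Hco : coprime nn dd.

Local Open Scope ring_scope.

Lemma fval_nil : fval r [::] = 0.
Proof. by rewrite /fval big_ord0. Qed.

Lemma fval_cons a s : fval r (a :: s) = a%:R + r * fval r s.
Proof.
rewrite /fval /= big_ord_recl /= expr0 mulr1; congr (_ + _).
rewrite mulr_sumr; apply: eq_bigr => i _ /=.
by rewrite exprS mulrCA.
Qed.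

Lemma fval_hb s : fval r s = (head 0%N s)%:R + r * fval r (behead s).
Proof. by case: s => [|a s]; rewrite ?fval_cons // fval_nil mulr0 addr0. Qed.

Lemma dd0 : (dd%:R : rat) != 0.
Proof. rewrite pnatr_eq0; lia. Qed.

Lemma rdd : r * dd%:R = nn%:R.
Proof. by rewrite Hr mulfVK // dd0. Qed.

Lemma natrz (n : nat) : (n%:Z)%:~R = n%:R :> rat.
Proof. by []. Qed.

Lemma fval_den s : exists (p : int) (K : nat), fval r s * (dd%:R ^+ K) = p%:~R.
Proof.
elim: s => [|a s [p [K IH]]]; first by exists 0, 0%N; rewrite fval_nil mul0r.
exists ((a * dd ^ K.+1)%N%:Z + nn%:Z * p), K.+1.
rewrite fval_cons exprS mulrDl.
have -> : r * fval r s * (dd%:R * dd%:R ^+ K) = (r * dd%:R) * (fval r s * dd%:R ^+ K) by ring.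
rewrite rdd IH.
rewrite rmorphD /= intrM !natrz natrM natrX exprS; ring.
Qed.

Lemma nn0 : (nn%:R : rat) != 0.
Proof. rewrite pnatr_eq0; lia. Qed.

Lemma divl (X : rat) (k : int) : (exists (p : int) (K : nat), X * dd%:R ^+ K = p%:~R) ->
  r * X = k%:~R -> exists m : int, k = m * nn%:Z /\ X = (m * dd%:Z)%:~R.
Proof.
move=> [p [K HX]] HrX.
have H1 : nn%:R * X = k%:~R * dd%:R by rewrite -rdd -HrX; ring.
have H2 : nn%:Z * p = k * (dd ^ K.+1)%N%:Z.
  apply: (intr_inj (R:=rat)).
  by rewrite !intrM !natrz -HX mulrA H1 natrX exprS; ring.
have Hdv : (nn%:Z %| k)%Z.
  have Hc : coprimez nn%:Z (dd ^ K.+1)%N%:Z.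
    by rewrite /coprimez /gcdz /= (eqP (coprimeXr K.+1 Hco)).
  rewrite -(Gauss_dvdzl _ Hc); apply/dvdzP; exists p; by rewrite -H2 mulrC.
have [m Hm] := dvdzP Hdv.
exists m; split => //.
apply: (mulfI nn0); rewrite H1 Hm !intrM natrz; ring.
Qed.

Lemma hb_ind (P : seq nat -> seq nat -> Prop) : P [::] [::] ->
  (forall s t, P (behead s) (behead t) -> P s t) -> forall s t, P s t.
Proof.
move=> H0 HS s t.
suff: forall N s t, (size s <= N)%N -> (size t <= N)%N -> P s t.
  by move=> /(_ (size s + size t)%N s t); apply; lia.
elim=> [|N IH] {}s {}t hs ht.
  by case: s hs => //; case: t ht.
apply: HS; apply: IH; rewrite size_behead; lia.
Qed.

Lemma flen_hb s : flen s = (head 0%N s + flen (behead s))%N.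
Proof. by case: s. Qed.

Lemma same_fval s t : same_fact s t -> fval r s = fval r t.
Proof.
move: s t; apply: hb_ind => // s t IH H.
rewrite (fval_hb s) (fval_hb t) -!nth0 (H 0%N) IH // => i.
by rewrite !nth_behead H.
Qed.

Lemma same_flen s t : same_fact s t -> flen s = flen t.
Proof.
move: s t; apply: hb_ind => // s t IH H.
rewrite (flen_hb s) (flen_hb t) -!nth0 (H 0%N) IH // => i.
by rewrite !nth_behead H.
Qed.

Lemma r_gt0 : 0 < r.
Proof. rewrite Hr divr_gt0 // ltr0n; lia. Qed.

Lemma fval_ge0 s : 0 <= fval r s.
Proof.
elim: s => [|a s IH]; first by rewrite fval_nil.
by rewrite fval_cons addr_ge0 ?ler0n // mulr_ge0 // ltW // r_gt0.
Qed.

Lemma fval0 s : fval r s = 0 -> flen s = 0%N.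
Proof.
elim: s => [|a s IH] //; rewrite fval_cons => H.
have ha := ler0n rat a; have hF : 0 <= r * fval r s by rewrite mulr_ge0 ?fval_ge0 // ltW // r_gt0.
have h1 : (a%:R : rat) = 0 by lra.
have h2 : r * fval r s = 0 by lra.
move: h2 => /eqP; rewrite mulf_eq0 gt_eqF ?r_gt0 //= => /eqP /IH.
move: h1 => /eqP; rewrite pnatr_eq0 => /eqP.
by rewrite /flen /= => -> ->.
Qed.

Lemma down_exists s i : (0 < i)%N -> (dd <= nth 0%N s i)%N ->
  exists w, fval r w = fval r s /\ (flen w < flen s)%N.
Proof.
elim: s i => [|a t IH] [|i] //=; first by lia.
move=> _; case: i => [|i] hd.
  case: t IH hd => [|b u] IH /= hd; first lia.
  exists ((a + nn)%N :: (b - dd)%N :: u); split.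
    rewrite !fval_cons natrD natrB // -rdd; ring.
  rewrite /flen /=; lia.
have [w [h1 h2]] := IH i.+1 erefl hd.
exists (a :: w); split; first by rewrite !fval_cons h1.
by rewrite /flen /= -/(flen w) -/(flen t); lia.
Qed.

Lemma up_exists s i : (nn <= nth 0%N s i)%N ->
  exists w, [/\ fval r w = fval r s, (flen s < flen w)%N & (nn <= nth 0%N w i.+1)%N].
Proof.
elim: s i => [|a t IH] [|i] //=; try (move=> ?; exfalso; lia).
  move=> ha; exists ((a - nn)%N :: (head 0%N t + dd)%N :: behead t); split.
  - rewrite !fval_cons (fval_hb t) natrD natrB // -rdd; ring.
  - rewrite /flen /= -/(flen t) -/(flen (behead t)) (flen_hb t); lia.
  - rewrite /=; lia.
move=> hd; have [w [h1 h2 h3]] := IH i hd.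
exists (a :: w); split => //; first by rewrite !fval_cons h1.
by rewrite /flen /= -/(flen w) -/(flen t); lia.
Qed.

Definition redc s := forall i, (0 < i)%N -> (nth 0%N s i < dd)%N.

Lemma fval_diff_den s t : exists (p : int) (K : nat),
  (fval r s - fval r t) * dd%:R ^+ K = p%:~R.
Proof.
have [p [K hp]] := fval_den s; have [q [L hq]] := fval_den t.
exists (p * (dd ^ L)%N%:Z - q * (dd ^ K)%N%:Z), (K + L)%N.
rewrite rmorphB /= !intrM !natrz !natrX -hp -hq exprD; ring.
Qed.

Lemma redc_diff s t : redc s -> redc t ->
  (exists m : int, fval r s - fval r t = m%:~R) ->
  forall j, (0 < j)%N -> nth 0%N s j = nth 0%N t j.
Proof.
move: s t; apply: hb_ind => //.
move=> s t IH hs ht [m hm].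
have hX : r * (fval r (behead s) - fval r (behead t)) =
    (m - (head 0%N s)%:Z + (head 0%N t)%:Z)%:~R.
  rewrite rmorphD rmorphB /= !natrz -hm (fval_hb s) (fval_hb t); ring.
have [m' [_ hm']] := divl (fval_diff_den _ _) hX.
have hs' : redc (behead s) by move=> i hi; rewrite nth_behead; apply: hs.
have ht' : redc (behead t) by move=> i hi; rewrite nth_behead; apply: ht.
have IH' := IH hs' ht' (ex_intro _ _ hm').
have hbb : fval r (behead (behead s)) = fval r (behead (behead t)).
  by apply: same_fval => i; move: (IH' i.+1 erefl); rewrite !nth_behead.
have hh : head 0%N (behead s) = head 0%N (behead t).
  move: hm'; rewrite (fval_hb (behead s)) (fval_hb (behead t)) hbb.
  have e : forall a b c : rat, a + c - (b + c) = a - b by move=> *; ring.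
  rewrite e -natrz -[X in _ - X]natrz -rmorphB /= => /intr_inj.
  have := hs 1%N erefl; have := ht 1%N erefl.
  rewrite -!nth_behead !nth0 => h1 h2 h3.
  move: h1 h2 h3; set a1 := head _ (behead s); set b1 := head _ (behead t) => h1 h2 h3.
  have : (m' = 0)%R by nia.
  move=> hm0; rewrite hm0 mul0r in h3; lia.
case=> [|[|j]] // _; first by rewrite -!nth_behead !nth0.
by move: (IH' j.+1 erefl); rewrite !nth_behead.
Qed.

Lemma redc_uniq s t : redc s -> redc t -> fval r s = fval r t -> same_fact s t.
Proof.
move=> hs ht he.
have h0 : exists m : int, fval r s - fval r t = m%:~R by exists 0; rewrite he subrr.
have hd := redc_diff hs ht h0.
have hb : fval r (behead s) = fval r (behead t).
  by apply: same_fval => i; rewrite !nth_behead hd.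
case=> [|j]; last by apply: hd.
move: he; rewrite (fval_hb s) (fval_hb t) hb => /addIr /eqP.
by rewrite eqr_nat !nth0 => /eqP.
Qed.

Lemma red_exists w : exists w', [/\ redc w', fval r w' = fval r w & (flen w' <= flen w)%N].
Proof.
have [n lt_wn] := ubnP (flen w); elim: n w lt_wn => // n IH w hw.
case: (classic (exists i, (0 < i)%N /\ (dd <= nth 0%N w i)%N)) => [[i [hi hd]]|hno].
  have [w1 [hv hl]] := down_exists hi hd.
  have [w2 [h1 h2 h3]] := IH w1 (leq_trans hl hw).
  by exists w2; split => //; [congruence | lia].
exists w; split => // i hi; rewrite ltnNge; apply/negP => hd; apply: hno; by exists i.
Qed.

Lemma min_redc s : (forall w, fval r w = fval r s -> (flen s <= flen w)%N) -> redc s.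
Proof.
move=> H i hi; rewrite ltnNge; apply/negP => hd.
have [w [h1 h2]] := down_exists hi hd.
have := H w h1; lia.
Qed.

Lemma redc_min s : redc s -> forall w, fval r w = fval r s -> (flen s <= flen w)%N.
Proof.
move=> hs w hw; have [w' [h1 h2 h3]] := red_exists w.
have h4 : fval r s = fval r w' by rewrite h2 hw.
have e := same_flen (redc_uniq hs h1 h4).
by rewrite e.
Qed.

Lemma small_bound s : (forall i, (nth 0%N s i < nn)%N) ->
  forall w, fval r w = fval r s -> (flen w <= flen s)%N.
Proof.
elim: s => [|a s IH] hs w hw.
  by rewrite fval_nil in hw; rewrite (fval0 hw).
have ha := hs 0%N; rewrite /= in ha.
have hX : r * (fval r s - fval r (behead w)) = ((head 0%N w)%:Z - a%:Z)%:~R.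
  rewrite rmorphB /= !natrz; move: hw; rewrite fval_cons (fval_hb w) => hw.
  rewrite mulrBr; lra.
have [c [hc _]] := divl (fval_diff_den _ _) hX.
have [c' hc'] : exists c' : nat, head 0%N w = (a + c' * nn)%N.
  exists `|c|%N; nia.
set w2 := ((head 0%N (behead w) + c' * dd)%N :: behead (behead w)).
have hw2 : fval r w2 = fval r s.
  apply: (mulfI (negbT (gt_eqF r_gt0))).
  move: hw; rewrite /w2 !fval_cons (fval_hb w) (fval_hb (behead w)) hc' !natrD !natrM.
  rewrite -rdd => hw; apply: (addrI (a%:R)); rewrite -hw; ring.
have := IH (fun i => hs i.+1) w2 hw2.
rewrite (flen_hb w) (flen_hb (behead w)) (flen_hb w2) (flen_hb (a :: s)) /w2 /= hc'.
move=> h; have : (c' * nn <= c' * dd)%N by apply: leq_mul => //; lia.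
lia.
Qed.

End S.

Theorem lemma3p1 (r x : rat) (z : seq nat)
  (hr0 : (0 < r)%R) (hr1 : (r < 1)%R) (hatomic : (1 < numq r)%R)
  (hx : x != 0%R) (hz : is_fact r x z) :
  ((forall w, is_fact r x w -> (flen z <= flen w)%N) <->
     (forall i : nat, (0 < i)%N -> (i < size z)%N -> ((nth 0%N z i)%:Z < denq r)%R))
  /\ (exists w, [/\ is_fact r x w,
                   (forall w', is_fact r x w' -> (flen w <= flen w')%N) &
                   (forall w', is_fact r x w' -> flen w' = flen w -> same_fact w' w)])
  /\ ((forall M : nat, exists w, is_fact r x w /\ (M < flen w)%N) <->
      (exists i : nat, (i < size z)%N /\ (numq r <= (nth 0%N z i)%:Z)%R))
  /\ (((forall w, is_fact r x w -> same_fact w z) <->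
       (forall w, is_fact r x w -> flen w = flen z))
      /\ ((forall w, is_fact r x w -> same_fact w z) ->
          forall i : nat, (i < size z)%N -> ((nth 0%N z i)%:Z < numq r)%R)).
Proof.
set nn := `|numq r|%N; set dd := `|denq r|%N.
have hd0 := denq_gt0 r.
have Hnum : numq r = (nn%:Z)%R by rewrite /nn; lia.
have Hden : denq r = (dd%:Z)%R by rewrite /dd; lia.
have Hr : r = (nn%:R / dd%:R)%R.
  by rewrite -[in LHS](divq_num_den r) Hnum Hden.
have Hn : (1 < nn)%N by rewrite Hnum in hatomic; lia.
have Hnd : (nn < dd)%N.
  move: hr1; rewrite Hr ltr_pdivrMr ?mul1r ?ltr_nat //; rewrite ltr0n; lia.
have Hco : coprime nn dd by exact: coprime_num_den.
rewrite Hnum Hden; rewrite /is_fact in hz *; subst x.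
have U := redc_uniq Hr Hn Hnd Hco.
have MR := min_redc Hr Hn Hnd Hco.
have RM := redc_min Hr Hn Hnd Hco.
have RE := red_exists Hr Hn Hnd Hco.
have UP := up_exists Hr Hn Hnd Hco.
have SB := small_bound Hr Hn Hnd Hco.
have SF := same_flen Hn Hnd Hco.
split; [|split; [|split]].
- split.
  + move=> H i hi hs; rewrite ltz_nat; exact: (MR _ H i hi).
  + move=> H; apply: RM => i hi.
    case: (ltnP i (size z)) => hs; first by move: (H i hi hs); rewrite ltz_nat.
    rewrite nth_default //; lia.
- have [w [h1 h2 h3]] := RE z.
  have wmin := RM _ h1.
  exists w; split => //.
  + by move=> w' hw'; apply: wmin; rewrite hw' h2.
  + move=> w' hw' hl; apply: U => //; last by rewrite hw' h2.
    apply: MR => w'' hw''; rewrite hl; apply: wmin; by rewrite hw'' hw' h2.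
- split.
  + move=> H; apply: NNPP => hno.
    have hs : forall i, (nth 0%N z i < nn)%N.
      move=> i; case: (ltnP i (size z)) => hs; last by rewrite nth_default //; lia.
      rewrite ltnNge; apply/negP => hn; apply: hno; exists i; split => //.
    have [w [hw hl]] := H (flen z).
    have := SB _ hs _ hw; lia.
  + move=> [i [hi hn]]; rewrite lez_nat in hn.
    suff: forall M, exists w, [/\ fval r w = fval r z, (M < flen w)%N &
                                exists j, (nn <= nth 0%N w j)%N].
      by move=> S M; have [w [h1 h2 _]] := S M; exists w.
    elim=> [|M [w [h1 h2 [j hj]]]].
      have [w [h1 h2 h3]] := UP _ _ hn; exists w; split => //; [lia | by exists i.+1].
    have [w' [h1' h2' h3']] := UP _ _ hj; exists w'; split; [congruence | lia | by exists j.+1].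
- split; first split.
  + by move=> H w hw; exact: SF _ _ (H w hw).
  + move=> H w hw; apply: U; last by [].
    * apply: MR => w'' hw''; rewrite (H _ hw) (H w''); first by [].
      by rewrite hw'' hw.
    * by apply: MR => w'' hw''; rewrite (H _ hw'').
  + move=> H i hs; rewrite ltz_nat ltnNge; apply/negP => hn.
    have [w [h1 h2 _]] := UP _ _ hn.
    have := SF _ _ (H w h1); lia.
Qed.
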